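(* Let $R$ be a $*$-ring with unity such that $xa=ax^*$ for all $a,x\in R$. Then the natural partial order is compatible with multiplication: if $a\leq b$ then $ca\leq cb$ (and $ac\leq bc$) for all $c\in R$.
   Context: The natural partial order on a $*$-ring $R$ with unity: $a\leq b$ iff there is $x\in R$ with $a=xa=xb=ax^*=bx^*$. *)

(* Defs.v *)
From mathcomp Require Import all_boot all_algebra.
Set Implicit Arguments. Unset Strict Implicit. Unset Printing Implicit Defensive.
Import GRing.Theory.
Local Open Scope ring_scope.

Definition is_star_involution (R : pzRingType) (s : R -> R) : Prop :=
  [/\ forall x y : R, s (x + y) = s x + s y,
      forall x y : R, s (x * y) = s y * s x
    & forall x : R, s (s x) = x].

Definition star_le (R : pzRingType) (s : R -> R) (a b : R) : Prop :=
  exists x : R, [/\ a = x * a, a = x * b, a = a * s x & a = b * s x].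

(* Main.v *)
Require Import Defs.
From mathcomp Require Import all_boot all_algebra.
Local Open Scope ring_scope.
Import GRing.Theory.

Theorem mainTheorem5 (R : pzRingType) (s : R -> R) :
  is_star_involution s ->
  (forall a x : R, x * a = a * s x) ->
  forall a b : R, star_le s a b ->
  forall c : R, star_le s (c * a) (c * b) /\ star_le s (a * c) (b * c).
Proof.
move=> _ H a b [x [h1 h2 h3 h4]] c.
have sid : forall y, s y = y by move=> y; have := H 1 y; rewrite mulr1 mul1r.
have com : forall u v : R, u * v = v * u by move=> u v; rewrite H sid.
split; exists x; rewrite !sid in h3 h4 *.
- split.
  + by rewrite mulrA (com x c) -mulrA -h1.
  + by rewrite mulrA (com x c) -mulrA -h2.
  + by rewrite -mulrA (com a x) -h1.
  + by rewrite -mulrA (com b x) -h2.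
- split.
  + by rewrite mulrA -h1.
  + by rewrite mulrA -h2.
  + by rewrite -mulrA (com c x) mulrA -h3.
  + by rewrite -mulrA (com c x) mulrA -h4.
Qed.
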